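(* Let $k\in\mathbb{R}_{\ge0}$ and $p\in\mathbb{R}_+$. Let $(x,y,z)$ be a triple of the classical Euclid tree with $x,y,z>k/p$, $(X,Y,Z)$ the corresponding triple of the $k$-generalized Euclid tree, and $(l,m,n)=(X/x,Y/y,Z/z)$. If $\max(|l-m|,|m-n|,|l-n|)<2p$, then for every $i\in\{1,2,3\}$ the comparison triple $(l',m',n')$ of $\mathcal{M}_{i;k}(X,Y,Z)$ and $\mathcal{M}_i(x,y,z)$ also satisfies $\max(|l'-m'|,|m'-n'|,|l'-n'|)<2p$; hence this bound persists under any further sequence of mutations.
   Context: For $k\in\mathbb{R}_{\ge0}$: $\mathcal{M}_{1;k}(X,Y,Z)=(k+Y+Z,Y,Z)$, $\mathcal{M}_{2;k}(X,Y,Z)=(X,k+X+Z,Z)$, $\mathcal{M}_{3;k}(X,Y,Z)=(X,Y,k+X+Y)$ on $\mathbb{R}_+^3$, $\mathcal{M}_i=\mathcal{M}_{i;0}$. The classical Euclid tree consists of triples obtained from a $0$-initial triple $(a,b,c)\in\mathbb{R}_+^3$ by applying the $\mathcal{M}_i$ along a finite reduced index sequence (consecutive indices distinct); the $k$-generalized Euclid tree consists of triples obtained from a $k$-initial triple $(A,B,C)\in\mathbb{R}_+^3$ ($A\ne B+C+k$, $B\ne A+C+k$, $C\ne A+B+k$) by applying the $\mathcal{M}_{i;k}$; corresponding triples are obtained along the same index sequence. *)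

(* Defs.v *)
From Stdlib Require Import Reals List.
Open Scope R_scope.

Definition triple := (R * R * R)%type.

Inductive idx := I1 | I2 | I3.

(* The k-generalized mutation M_{i;k}; M_i = M_{i;0}. *)
Definition mut (k : R) (i : idx) (t : triple) : triple :=
  match t with (X, Y, Z) =>
    match i with
    | I1 => (k + Y + Z, Y, Z)
    | I2 => (X, k + X + Z, Z)
    | I3 => (X, Y, k + X + Y)
    end
  end.

(* Apply the mutations along an index sequence, first element first. *)
Definition apply_seq (k : R) (s : list idx) (t : triple) : triple :=
  fold_left (fun acc i => mut k i acc) s t.

Fixpoint reduced (s : list idx) : Prop :=
  match s with
  | nil => True
  | i :: s' =>
      match s' with
      | nil => True
      | j :: _ => i <> j /\ reduced s'
      end
  end.

Definition k_initial (k : R) (t : triple) : Prop :=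
  match t with (A, B, C) =>
    0 < A /\ 0 < B /\ 0 < C /\
    A <> B + C + k /\ B <> A + C + k /\ C <> A + B + k
  end.

Definition comparison (T t : triple) : triple :=
  match T, t with (X, Y, Z), (x, y, z) => (X / x, Y / y, Z / z) end.

Definition spread (u : triple) : R :=
  match u with (l, m, n) =>
    Rmax (Rabs (l - m)) (Rmax (Rabs (m - n)) (Rabs (l - n)))
  end.

(* Main.v *)
Require Import Defs.
From Stdlib Require Import Reals List Lra Psatz.
Open Scope R_scope.

Lemma K (k p m n y z q d : R) : 0 <= k -> 0 < p -> k < p*y -> 0 < z -> 0 < y ->
  Rabs (n - m) < 2*p -> d = y + z -> q*d = k + m*y + n*z -> Rabs (q - m) < 2*p.
Proof.
  intros Hk Hp Hy Hz Hy0 Hnm Hd Hq. subst d. apply Rabs_def2 in Hnm. destruct Hnm.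
  apply Rabs_def1.
  - assert ((q-m-2*p)*(y+z) < 0) by nra. nra.
  - assert ((q-m+2*p)*(y+z) > 0) by nra. nra.
Qed.

Lemma kpy (k p y : R) : 0 < p -> k/p < y -> k < p*y.
Proof. intros Hp H. apply (Rmult_lt_compat_l p) in H; auto.
  replace (p*(k/p)) with k in H by (field; lra). exact H. Qed.

Lemma kp0 (k p : R) : 0 <= k -> 0 < p -> 0 <= k/p.
Proof. intros. unfold Rdiv. apply Rmult_le_pos; auto. left; apply Rinv_0_lt_compat; auto. Qed.

Lemma spread_le (a b c d : R) : Rabs a < d -> Rabs b < d -> Rabs c < d ->
  Rmax (Rabs a) (Rmax (Rabs b) (Rabs c)) < d.
Proof. intros. repeat apply Rmax_lub_lt; auto. Qed.

Lemma spread_inv (a b c d : R) : Rmax (Rabs a) (Rmax (Rabs b) (Rabs c)) < d ->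
  Rabs a < d /\ Rabs b < d /\ Rabs c < d.
Proof. intros H. pose proof (Rmax_l (Rabs a) (Rmax (Rabs b) (Rabs c))).
  pose proof (Rmax_r (Rabs a) (Rmax (Rabs b) (Rabs c))).
  pose proof (Rmax_l (Rabs b) (Rabs c)). pose proof (Rmax_r (Rabs b) (Rabs c)). lra. Qed.

Definition good (k p : R) (t : triple) : Prop :=
  let '(x, y, z) := t in k / p < x /\ k / p < y /\ k / p < z.

Lemma step (k p : R) (i : idx) (T t : triple) : 0 <= k -> 0 < p -> good k p t ->
  spread (comparison T t) < 2*p ->
  spread (comparison (mut k i T) (mut 0 i t)) < 2*p /\ good k p (mut 0 i t).
Proof.
  intros Hk Hp. destruct T as [[X Y] Z]. destruct t as [[x y] z].
  simpl. intros [Hx [Hy Hz]] Hs. apply spread_inv in Hs. destruct Hs as [H1 [H2 H3]].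
  pose proof (kp0 k p Hk Hp).
  pose proof (kpy k p x Hp Hx). pose proof (kpy k p y Hp Hy). pose proof (kpy k p z Hp Hz).
  set (l := X/x) in *. set (m := Y/y) in *. set (n := Z/z) in *.
  assert (EX : X = l*x) by (unfold l; field; lra).
  assert (EY : Y = m*y) by (unfold m; field; lra).
  assert (EZ : Z = n*z) by (unfold n; field; lra).
  rewrite Rabs_minus_sym in H2.
  assert (0 < x) by lra. assert (0 < y) by lra. assert (0 < z) by lra.
  destruct i; simpl; (split; [apply spread_le|]); try lra;
  change (X/x) with l; change (Y/y) with m; change (Z/z) with n;
  try assumption; try (rewrite Rabs_minus_sym; assumption);
  let tac mm nn a b := first [ solve [eapply (K k p mm nn a b); [ lra | lra | assumption | lra | lra | first [assumption | rewrite Rabs_minus_sym; assumption ] | reflexivity | rewrite ?EX, ?EY, ?EZ; field; lra ]] |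
                          solve [rewrite Rabs_minus_sym; eapply (K k p mm nn a b); [ lra | lra | assumption | lra | lra | first [assumption | rewrite Rabs_minus_sym; assumption ] | reflexivity | rewrite ?EX, ?EY, ?EZ; field; lra ]] ] in
  first [tac l m x y | tac m l y x | tac l n x z | tac n l z x | tac m n y z | tac n m z y].
Qed.

Theorem lemma5p7 (k p : R) (a b c A B C : R) (s : list idx) :
  0 <= k -> 0 < p ->
  k_initial 0 (a, b, c) -> k_initial k (A, B, C) -> reduced s ->
  (let '(x, y, z) := apply_seq 0 s (a, b, c) in
   k / p < x /\ k / p < y /\ k / p < z) ->
  spread (comparison (apply_seq k s (A, B, C)) (apply_seq 0 s (a, b, c))) < 2 * p ->
  (forall i : idx,
     spread (comparison (mut k i (apply_seq k s (A, B, C)))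
                        (mut 0 i (apply_seq 0 s (a, b, c)))) < 2 * p) /\
  (forall s' : list idx,
     spread (comparison (apply_seq k s' (apply_seq k s (A, B, C)))
                        (apply_seq 0 s' (apply_seq 0 s (a, b, c)))) < 2 * p).
Proof.
  intros Hk Hp _ _ _ Hg Hs.
  assert (Hg' : good k p (apply_seq 0 s (a, b, c))) by exact Hg.
  clear Hg.
  split.
  - intros i. apply step; auto.
  - intros s'. revert Hg' Hs.
    generalize (apply_seq k s (A, B, C)) (apply_seq 0 s (a, b, c)).
    induction s' as [|i s' IH]; intros T t Hg Hs; simpl; auto.
    destruct (step k p i T t Hk Hp Hg Hs). apply IH; auto.
Qed.
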